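(* Let $p \geq 1$, let $\boldsymbol \Omega$ be a $p\times p$ positive definite matrix and $\boldsymbol \Psi$ a $p\times p$ non-diagonal positive definite matrix with unit diagonal. Let $\boldsymbol \beta = \boldsymbol s \circ \boldsymbol z$ where $\boldsymbol z \sim \text{normal}(\boldsymbol 0, \boldsymbol \Omega)$ and $\boldsymbol s \sim \text{normal}(\boldsymbol 0, \boldsymbol \Psi)$ are independent (the SPN prior). Then for every $j \in \{1,\dots,p\}$ the marginal prior density of $\beta_j$ at $0$, $$p(\beta_j = 0 \mid \boldsymbol \Psi, \boldsymbol \Omega) = \int_{\mathbb{R}^{p-1}} \int_{\mathbb{R}^p} \Big(\prod_{i=1}^p \frac{1}{|s_i|}\Big)\phi_{\boldsymbol \Omega}(\boldsymbol b/\boldsymbol s)\,\phi_{\boldsymbol \Psi}(\boldsymbol s)\, d\boldsymbol s\, d\boldsymbol b_{-j}\Big|_{b_j = 0},$$ equals $+\infty$.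
   Context: $\phi_{\boldsymbol A}$ denotes the $\text{normal}(\boldsymbol 0,\boldsymbol A)$ density, $\boldsymbol b/\boldsymbol s$ is elementwise division, $\circ$ is the elementwise product, and $\boldsymbol b_{-j}$ denotes $\boldsymbol b$ with its $j$-th coordinate removed (the outer integral is over $\boldsymbol b_{-j}$ with $b_j$ fixed at $0$). *)

(* Defs.v *)
From HB Require Import structures.
From mathcomp Require Import all_boot all_order all_algebra.
From mathcomp Require Import all_classical all_reals all_analysis.
Set Implicit Arguments. Unset Strict Implicit. Unset Printing Implicit Defensive.
Import Order.TTheory GRing.Theory Num.Theory.
Local Open Scope ring_scope.
Local Open Scope ereal_scope.

(* Iterated one-dimensional Lebesgue integrals.  [iter_int D n F] integrates
   F : (nat -> R) -> \bar R over the coordinates k < n with [D k] true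
   (each w.r.t. the Lebesgue measure on R, innermost = coordinate 0), while
   every coordinate k < n with [D k] false is fixed to 0 (coordinates >= n
   are irrelevant and set to 0). *)
Fixpoint iter_int (R : realType) (D : nat -> bool) (n : nat)
    (F : (nat -> R) -> \bar R) : \bar R :=
  match n with
  | 0 => F (fun _ => 0%R)
  | n'.+1 =>
      if D n' then
        \int[@lebesgue_measure R]_(x in [set: R])
           iter_int D n' (fun v => F (fun k => if k == n' then x else v k))
      else iter_int D n' (fun v => F (fun k => if k == n' then 0%R else v k))
  end.

(* Lebesgue integral of a nonnegative function over R^n (row vectors),
   as an iterated integral (equal to the product-measure integral by Tonelli
   for measurable nonnegative integrands). *)
Definition int_Rn (R : realType) (n : nat) (F : 'rV[R]_n -> \bar R) : \bar R :=
  iter_int predT n (fun v => F (\row_(i < n) v i)).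

Definition int_Rn_except0 (R : realType) (n : nat) (j : 'I_n)
    (F : 'rV[R]_n -> \bar R) : \bar R :=
  iter_int (fun k => k != nat_of_ord j) n (fun v => F (\row_(i < n) v i)).

Definition qform (R : pzRingType) (n : nat) (A : 'M[R]_n) (x : 'rV[R]_n) : R :=
  (x *m A *m x^T) ord0 ord0.

Definition posdef (R : realFieldType) (n : nat) (A : 'M[R]_n) : Prop :=
  A^T = A /\ forall x : 'rV[R]_n, (x != 0)%R -> (0 < qform A x)%R.

Definition normal_density (R : realType) (n : nat) (A : 'M[R]_n)
    (x : 'rV[R]_n) : R :=
  ((2 * pi) `^ (- (n%:R / 2)) * (\det A) `^ (- (1/2))
    * expR (- (qform (invmx A) x) / 2))%R.

Definition spn_integrand (R : realType) (n : nat) (Om Psi : 'M[R]_n)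
    (b s : 'rV[R]_n) : R :=
  ((\prod_(i < n) `|s ord0 i|^-1)
   * normal_density Om (\row_(i < n) (b ord0 i / s ord0 i))
   * normal_density Psi s)%R.

Definition spn_marginal_at0 (R : realType) (n : nat) (Om Psi : 'M[R]_n)
    (j : 'I_n) : \bar R :=
  int_Rn_except0 j (fun b => int_Rn (fun s => (spn_integrand Om Psi b s)%:E)).

(* Main.v *)
Require Import Defs.
From HB Require Import structures.
From mathcomp Require Import all_boot all_order all_algebra.
From mathcomp Require Import all_classical all_reals all_analysis.
Import Order.TTheory GRing.Theory Num.Theory.
Local Open Scope ring_scope.
Local Open Scope ereal_scope.

Lemma my_le_integral (R : realType) (f g : R -> \bar R) :
  (forall x, 0 <= f x) -> (forall x, f x <= g x) ->
  \int[@lebesgue_measure R]_(x in [set: R]) f x <= \int[@lebesgue_measure R]_(x in [set: R]) g x.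
Proof.
move=> f0 fg.
have g0 : forall x, 0 <= g x by move=> x; exact: le_trans (f0 x) (fg x).
rewrite /integral !patch_setT.
have -> : f^\+ = f by apply/funext => x; apply: (ge0_funeposE (D:=setT)) => //; rewrite inE.
have -> : g^\+ = g by apply/funext => x; apply: (ge0_funeposE (D:=setT)) => //; rewrite inE.
have -> : f^\- = cst 0 by apply/funext => x; apply: (ge0_funenegE (D:=setT)) => //; rewrite inE.
have -> : g^\- = cst 0 by apply/funext => x; apply: (ge0_funenegE (D:=setT)) => //; rewrite inE.
apply: leeB => //; apply: ereal_sup_le.
by move=> _ [h hf <-]; exists h => // x; exact: le_trans (hf x) (fg x).
Qed.

Definition Pz {R : realType} (D : nat -> bool) (v : nat -> R) :=
  forall k, ~~ D k -> v k = 0%R.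

Lemma iter_int_ge0 (R : realType) D n (F : (nat -> R) -> \bar R) :
  (forall v, 0 <= F v) -> 0 <= iter_int D n F.
Proof.
elim: n F => [|n IH] F F0 //=.
case: (D n); first by apply: integral_ge0 => x _; apply: IH.
exact: IH.
Qed.

Lemma upd_Pz (R : realType) D n (v : nat -> R) x :
  Pz D v -> (D n \/ x = 0%R) -> Pz D (fun k => if k == n then x else v k).
Proof.
move=> Pv Hx k Dk; case: eqP => [kn|_]; last exact: Pv.
by case: Hx => // Dn; move: Dk; rewrite kn Dn.
Qed.

Lemma le_iter_int (R : realType) D n (F G : (nat -> R) -> \bar R) :
  (forall v, 0 <= F v) -> (forall v, Pz D v -> F v <= G v) ->
  iter_int D n F <= iter_int D n G.
Proof.
elim: n F G => [|n IH] F G F0 FG /=; first by apply: FG.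
case Dn: (D n).
  apply: my_le_integral => x; first by apply: iter_int_ge0.
  apply: IH => // v Pv; apply: FG; apply: upd_Pz => //; by left.
apply: IH => // v Pv; apply: FG; apply: upd_Pz => //; by right.
Qed.

Lemma iter_prod (R : realType) D (f : nat -> R -> R) (I : nat -> R) :
  (forall k x, (0 <= f k x)%R) ->
  (forall k, measurable_fun setT (f k)) ->
  (forall k, \int[@lebesgue_measure R]_(x in [set: R]) (f k x)%:E = (I k)%:E) ->
  forall n (G : (nat -> R) -> \bar R) (c : R), (0 <= c)%R ->
  (forall v, Pz D v -> G v = (c * \prod_(k < n | D k) f k (v k))%:E) ->
  iter_int D n G = (c * \prod_(k < n | D k) I k)%:E.
Proof.
move=> f0 mf If; elim=> [|n IH] G c c0 HG /=.
  by rewrite HG ?big_ord0 ?mulr1.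
rewrite big_mkcond big_ord_recr /= -big_mkcond.
case Dn: (D n).
- have inner : forall x, iter_int D n (fun v => G (fun k => if k == n then x else v k))
     = ((c * \prod_(k < n | D k) I k) * f n x)%:E.
    move=> x; rewrite (IH _ (c * f n x)%R); last 2 first.
    + by rewrite mulr_ge0.
    + move=> v Pv; rewrite HG; last by apply: upd_Pz => //; left.
      rewrite big_mkcond big_ord_recr /= -big_mkcond Dn eqxx.
      congr (_%:E); rewrite [RHS]mulrAC -mulrA; congr (_ * _)%R; congr (_ * _)%R.
      by apply: eq_bigr => k _; rewrite (ltn_eqF (ltn_ord k)).
    by congr (_%:E); rewrite mulrAC.
  transitivity (\int[@lebesgue_measure R]_(x in [set: R]) ((c * \prod_(k < n | D k) I k)%:E * (f n x)%:E)).
    by apply: eq_integral => x _; rewrite inner EFinM.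
  rewrite ge0_integralZl_EFin //.
  + by rewrite If -EFinM mulrA.
  + by move=> x _; rewrite lee_fin.
  + by apply/measurable_realfun.measurable_EFinP; exact: mf.
  + rewrite mulr_ge0 // prodr_ge0 // => k _.
    by rewrite -lee_fin -If; apply: integral_ge0 => x _; rewrite lee_fin.
- rewrite (IH _ c c0) ?mulr1 //.
  move=> v Pv; rewrite HG; last by apply: upd_Pz => //; right.
  rewrite big_mkcond big_ord_recr /= -big_mkcond Dn mulr1.
  by congr (_%:E); congr (_ * _)%R; apply: eq_bigr => k _; rewrite (ltn_eqF (ltn_ord k)).
Qed.
Local Close Scope ereal_scope.

Definition indoc {R : realType} (a b : R) : R -> R := \1_([set` `]a, b]%R] : set R).
Definition indcc {R : realType} (a b : R) : R -> R := \1_([set` `[a, b]%R] : set R).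

Lemma indocE (R : realType) (a b x : R) : indoc a b x = if (a < x) && (x <= b) then 1 else 0.
Proof. rewrite /indoc indicE mem_setE in_itv /=; by case: ifP. Qed.
Lemma indccE (R : realType) (a b x : R) : indcc a b x = if (a <= x) && (x <= b) then 1 else 0.
Proof. rewrite /indcc indicE mem_setE in_itv /=; by case: ifP. Qed.

Lemma int_indcc (R : realType) (a b : R) : a < b ->
  (\int[@lebesgue_measure R]_(x in [set: R]) (indcc a b x)%:E = (b - a)%:E)%E.
Proof.
move=> ab; rewrite integral_indic //= setIT lebesgue_measure_itv /= lte_fin ab.
by rewrite EFinB.
Qed.
Lemma int_indoc (R : realType) (a b : R) : a < b ->
  (\int[@lebesgue_measure R]_(x in [set: R]) (indoc a b x)%:E = (b - a)%:E)%E.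
Proof.
move=> ab; rewrite integral_indic //= setIT lebesgue_measure_itv /= lte_fin ab.
by rewrite EFinB.
Qed.
From mathcomp Require Import lra.

Definition hN {R : realType} (N : nat) (x : R) : R :=
  \sum_(k < N) (2 ^+ k) * indoc 0 ((2 ^+ k)^-1) x.

Lemma indoc_ge0 (R : realType) (a b x : R) : 0 <= indoc a b x.
Proof. by rewrite indocE; case: ifP. Qed.
Lemma indcc_ge0 (R : realType) (a b x : R) : 0 <= indcc a b x.
Proof. by rewrite indccE; case: ifP. Qed.

Lemma hN_ge0 (R : realType) N (x : R) : 0 <= hN N x.
Proof. by apply: sumr_ge0 => k _; rewrite mulr_ge0 ?indoc_ge0 // exprn_ge0. Qed.

Lemma hN_meas (R : realType) N : measurable_fun [set: R] (@hN R N).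
Proof.
rewrite /hN; apply: measurable_sum => k.
apply: measurable_realfun.measurable_funM; first exact: measurable_cst.
exact: measurable_realfun.measurable_indic.
Qed.

Lemma hN_int (R : realType) N :
  (\int[@lebesgue_measure R]_(x in [set: R]) (hN N x)%:E = (N%:R)%:E)%E.
Proof.
rewrite /hN.
transitivity (\int[@lebesgue_measure R]_(x in [set: R]) \sum_(k < N) (((2 ^+ k)%R)%:E * (indoc 0 ((2 ^+ k)^-1)%R x)%:E))%E.
  by apply: eq_integral => x _; rewrite -sumEFin; apply: eq_bigr => k _; rewrite EFinM.
rewrite ge0_integral_sum //; last first.
  by move=> k x _; rewrite -EFinM lee_fin mulr_ge0 ?indoc_ge0 // exprn_ge0.
  move=> k; apply: emeasurable_funM; first exact: measurable_cst.
  by apply/measurable_realfun.measurable_EFinP; exact: measurable_realfun.measurable_indic.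
transitivity (\sum_(k < N) (1%:E : \bar R))%E.
  apply: eq_bigr => k _; rewrite ge0_integralZl_EFin //; 
   try (by move=> x _; rewrite lee_fin indoc_ge0);
   try (by apply/measurable_realfun.measurable_EFinP; exact: measurable_realfun.measurable_indic);
   try (by rewrite exprn_ge0).
  rewrite int_indoc ?invr_gt0 ?exprn_gt0 // subr0 -EFinM divff //.
by rewrite sumEFin sumr_const card_ord.
Qed.

Lemma hN_rec (R : realType) N (x : R) :
  hN N.+1 x = indoc 0 1 x + 2 * hN N (2 * x).
Proof.
rewrite /hN big_ord_recl /= expr0 invr1 mul1r; congr (_ + _).
rewrite mulr_sumr; apply: eq_bigr => i _ /=.
rewrite /bump /= add1n exprS mulrA; congr (_ * _).
rewrite !indocE.
have y0 : 0 < (2 ^+ i : R)^-1 by rewrite invr_gt0 exprn_gt0.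
rewrite invfM; set z := (2 ^+ i : R)^-1.
have -> : (0 < x) && (x <= 2^-1 * z) = (0 < 2 * x) && (2 * x <= z).
  apply/idP/idP => /andP [h1 h2]; apply/andP; split; lra.
by [].
Qed.

Lemma hN_bound (R : realType) N (x : R) : 0 < x ->
  hN N x <= (if x <= 1 then 2 / x - 1 else 0).
Proof.
elim: N x => [|N IH] x x0.
  rewrite /hN big_ord0; case: ifP => // x1.
  have : 1 <= x^-1 by rewrite invf_ge1.
  set z := x^-1; lra.
rewrite hN_rec indocE.
have := IH (2 * x) ltac:(lra).
have e : 2 / (2 * x) = x^-1 by rewrite invfM mulrA divff // mul1r.
rewrite e.
have : 0 < x^-1 by rewrite invr_gt0.
have := @hN_ge0 R N (2 * x).
case: (ltrP 1 x) => x1.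
  have -> : (2 * x <= 1) = false by apply/negbTE; rewrite -ltNge; lra.
  by rewrite andbF; lra.
have : 1 <= x^-1 by rewrite invf_ge1.
rewrite x0 /=; set z := x^-1.
case: ifP => _; lra.
Qed.

Lemma hN_le (R : realType) N (x : R) : 0 < x -> hN N x <= 2 / x.
Proof.
move=> x0; have := @hN_bound R N x x0; have : 0 < 2 / x by rewrite divr_gt0.
case: ifP => _; lra.
Qed.

Lemma hN_nonpos (R : realType) N (x : R) : ~~ ((0 < x) && (x <= 1)) -> hN N x <= 0.
Proof.
rewrite negb_and -!ltNge => /orP [x0|x1].
  rewrite /hN big1 // => k _; rewrite indocE.
  by rewrite (negbTE x0) mulr0.
have := @hN_bound R N x (lt_trans ltr01 x1).
by rewrite (lt_geF x1) => h.
Qed.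

Set Implicit Arguments. Unset Strict Implicit.
From mathcomp Require Import ring.

Lemma qform_bound (R : realType) n (M : 'M[R]_n) (x : 'rV[R]_n) :
  (forall i, `|x ord0 i| <= 2) ->
  qform M x <= 4 * \sum_k \sum_i `|M i k|.
Proof.
move=> hx; rewrite /qform !mxE.
apply: le_trans (ler_norm _) _.
apply: le_trans (ler_norm_sum _ _ _) _.
rewrite mulr_sumr; apply: ler_sum => k _.
rewrite !mxE mulr_suml mulr_sumr.
apply: le_trans (ler_norm_sum _ _ _) _.
apply: ler_sum => i _.
rewrite !normrM.
have h1 := hx i; have h2 := hx k.
have h3 := normr_ge0 (x ord0 i); have h4 := normr_ge0 (x ord0 k); have h5 := normr_ge0 (M i k).
have hab : `|x ord0 i| * `|x ord0 k| <= 2 * 2 by apply: ler_pM.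
rewrite mulrAC mulrC [4 * _]mulrC; apply: ler_wpM2l => //.
by apply: le_trans hab _; lra.
Qed.

Lemma det_neq0 (R : realType) n (A : 'M[R]_n) : posdef A -> \det A != 0.
Proof.
move=> [_ hA]; apply/negP => /det0P [v v0 vA].
have := hA v v0; rewrite /qform vA mul0mx mxE ltxx //.
Qed.

Lemma powR_gt0' (R : realType) (a x : R) : a != 0 -> 0 < a `^ x.
Proof. by move=> a0; rewrite /powR (negbTE a0) expR_gt0. Qed.

Definition cA (R : realType) n (A : 'M[R]_n) : R :=
  (2 * pi) `^ (- (n%:R / 2)) * (\det A) `^ (- (1/2))
    * expR (- (4 * \sum_k \sum_i `|invmx A i k|) / 2).

Lemma cA_gt0 (R : realType) n (A : 'M[R]_n) : posdef A -> 0 < cA A.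
Proof.
move=> hA; rewrite /cA !mulr_gt0 ?expR_gt0 ?powR_gt0' ?det_neq0 //.
by rewrite mulf_neq0 // gt_eqF // pi_gt0.
Qed.

Lemma nd_lb (R : realType) n (A : 'M[R]_n) (x : 'rV[R]_n) :
  (forall i, `|x ord0 i| <= 2) -> cA A <= normal_density A x.
Proof.
move=> hx; rewrite /cA /normal_density; apply: ler_wpM2l.
  by rewrite mulr_ge0 ?powR_ge0.
rewrite ler_expR; have := qform_bound (invmx A) hx; lra.
Qed.

Lemma indcc01 (R : realType) (a b x : R) : 0 <= indcc a b x <= 1.
Proof. by rewrite indccE; case: ifP; rewrite ?lexx ?ler01. Qed.

Definition fs (R : realType) (j N : nat) (k : nat) : R -> R :=
  if k == j then hN N else indcc 1 2.

Definition Cst (R : realType) p (Om Psi : 'M[R]_p) (j : 'I_p) : R :=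
  (\prod_(k < p | nat_of_ord k != nat_of_ord j) 2^-1) * cA Om * cA Psi / 2.

Lemma nd_ge0 (R : realType) n (A : 'M[R]_n) x : 0 <= normal_density A x.
Proof. by rewrite /normal_density !mulr_ge0 ?powR_ge0 ?expR_ge0. Qed.

Lemma integrand_ge0 (R : realType) p (Om Psi : 'M[R]_p) b s :
  0 <= spn_integrand Om Psi b s.
Proof.
rewrite /spn_integrand; apply: mulr_ge0; last exact: nd_ge0.
apply: mulr_ge0; last exact: nd_ge0.
by apply: prodr_ge0 => i _; rewrite invr_ge0.
Qed.

Lemma prod_zero (R : realType) p (P : pred 'I_p) (F : 'I_p -> R) k :
  P k -> F k = 0 -> \prod_(i | P i) F i = 0.
Proof. by move=> Pk Fk; rewrite (bigD1 k) //= Fk mul0r. Qed.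

Lemma point_lb (R : realType) p (Om Psi : 'M[R]_p) (j : 'I_p) N (v w : nat -> R) :
  posdef Om -> posdef Psi -> v j = 0 ->
  (Cst Om Psi j * \prod_(k < p | nat_of_ord k != nat_of_ord j) indcc (-1) 1 (v k))
    * \prod_(k < p) fs j N k (w k)
   <= spn_integrand Om Psi (\row_(i < p) v i) (\row_(i < p) w i).
Proof.
move=> hOm hPsi vj.
have Hfs : \prod_(k < p) fs j N k (w k) = hN N (w j) * \prod_(k | k != j) indcc 1 2 (w k).
  rewrite (bigD1 j) //= /fs eqxx; congr (_ * _); apply: eq_bigr => k kj; rewrite ifN //.
have Hfb : \prod_(k < p | nat_of_ord k != nat_of_ord j) indcc (-1) 1 (v k)
   = \prod_(k | k != j) indcc (-1) 1 (v k) by apply: eq_bigl.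
rewrite Hfs Hfb.
set Pb := \prod_(k | k != j) _.
set Pw := \prod_(k | k != j) indcc 1 2 (w k).
have Pb01 : 0 <= Pb <= 1.
  by apply/andP; split; [apply: prodr_ge0 | apply: prodr_ile1] => k _; [exact: indcc_ge0 | exact: indcc01].
have Pw01 : 0 <= Pw <= 1.
  by apply/andP; split; [apply: prodr_ge0 | apply: prodr_ile1] => k _; [exact: indcc_ge0 | exact: indcc01].
have C0 : 0 < Cst Om Psi j.
  rewrite /Cst; apply: divr_gt0 => //; apply: mulr_gt0; last exact: cA_gt0.
  apply: mulr_gt0; last exact: cA_gt0.
  by apply: prodr_gt0 => k _; rewrite invr_gt0.
have I0 := integrand_ge0 Om Psi (\row_(i < p) v i) (\row_(i < p) w i).
have H0 := @hN_ge0 R N (w j).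
case: (boolP ((0 < w j) && (w j <= 1))) => hw; last first.
  have Hn := @hN_nonpos R N (w j) hw.
  have -> : hN N (w j) = 0 by apply/eqP; rewrite eq_le Hn H0.
  by rewrite mul0r mulr0.
case: (boolP (Pb * Pw == 0)) => hP.
  have -> : Cst Om Psi j * Pb * (hN N (w j) * Pw) = Cst Om Psi j * hN N (w j) * (Pb * Pw) by ring.
  by rewrite (eqP hP) mulr0.
have hv : forall k : 'I_p, k != j -> -1 <= v k <= 1.
  move=> k kj; apply/negPn/negP => hk.
  have : Pb = 0 by apply: (prod_zero kj); rewrite indccE (negbTE hk).
  by move=> e; move: hP; rewrite e mul0r eqxx.
have hw' : forall k : 'I_p, k != j -> 1 <= w k <= 2.
  move=> k kj; apply/negPn/negP => hk.
  have : Pw = 0 by apply: (prod_zero kj); rewrite indccE (negbTE hk).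
  by move=> e; move: hP; rewrite e mulr0 eqxx.
move/andP: hw => [wj0 wj1].
have wabs : forall k : 'I_p, `|w k| <= 2.
  move=> k; case: (eqVneq k j) => [->|kj].
    by rewrite ger0_norm ?(ltW wj0) //; lra.
  by have /andP [h1 h2] := hw' k kj; rewrite ger0_norm; lra.
have xabs : forall i : 'I_p, `|(\row_(i < p) ((\row_(i < p) v i) ord0 i / (\row_(i < p) w i) ord0 i)) ord0 i| <= 2.
  move=> i; rewrite !mxE; case: (eqVneq i j) => [->|ij].
    by rewrite vj mul0r normr0.
  have /andP [h1 h2] := hw' i ij; have /andP [h3 h4] := hv i ij.
  rewrite normrM normfV (ger0_norm (_ : 0 <= w i)); last by lra.
  have : (w i)^-1 <= 1 by rewrite invf_le1 //; lra.
  have : 0 <= (w i)^-1 by rewrite invr_ge0; lra.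
  have : `|v i| <= 1 by rewrite ler_norml; lra.
  have := normr_ge0 (v i).
  set a := `|v i|; set b := (w i)^-1; nra.
have wabs' : forall i : 'I_p, `|(\row_(i < p) w i) ord0 i| <= 2 by move=> i; rewrite mxE.
have HOm := nd_lb Om xabs.
have HPsi := nd_lb Psi wabs'.
set Q := \prod_(k < p | nat_of_ord k != nat_of_ord j) (2:R)^-1.
have Q0 : 0 <= Q by apply: prodr_ge0 => k _; rewrite invr_ge0.
have Hprod : (w j)^-1 * Q <= \prod_(i < p) `|(\row_(i < p) w i) ord0 i|^-1.
  rewrite (bigD1 j) //= mxE ger0_norm ?(ltW wj0) //.
  apply: ler_wpM2l; first by rewrite invr_ge0 ltW.
  rewrite /Q (eq_bigl (fun k : 'I_p => k != j)) //.
  apply: ler_prod => k kj; rewrite invr_ge0 /= mxE.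
  have /andP [h1 h2] := hw' k kj.
  by rewrite lef_pV2 ?posrE ?normr_gt0 ?wabs //; lra.
have HhN := @hN_le R N (w j) wj0.
have cO := cA_gt0 hOm; have cP := cA_gt0 hPsi.
have hN0 := H0.
rewrite /spn_integrand.
apply: le_trans (_ : Cst Om Psi j * hN N (w j) <= _).
  rewrite -mulrA; apply: ler_wpM2l; first exact: ltW.
  move/andP: Pb01 => [p0 p1]; move/andP: Pw01 => [q0 q1].
  have : hN N (w j) * Pw <= hN N (w j) by rewrite ler_piMr.
  have : Pb * (hN N (w j) * Pw) <= hN N (w j) * Pw by rewrite ler_piMl // mulr_ge0.
  lra.
apply: le_trans (_ : Cst Om Psi j * (2 / w j) <= _).
  by apply: ler_wpM2l; first exact: ltW.
have -> : Cst Om Psi j * (2 / w j) = (w j)^-1 * Q * cA Om * cA Psi.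
  rewrite /Cst -/Q; field; lra.
apply: ler_pM; [| |apply: ler_pM|] => //.
- apply: mulr_ge0; last exact: ltW.
  by apply: mulr_ge0 => //; rewrite invr_ge0 ltW.
- exact: ltW.
- by apply: mulr_ge0 => //; rewrite invr_ge0 ltW.
- exact: ltW.
Qed.

Lemma Cst_gt0 (R : realType) p (Om Psi : 'M[R]_p) (j : 'I_p) :
  posdef Om -> posdef Psi -> 0 < Cst Om Psi j.
Proof.
move=> hOm hPsi.
rewrite /Cst; apply: divr_gt0 => //; apply: mulr_gt0; last exact: cA_gt0.
apply: mulr_gt0; last exact: cA_gt0.
by apply: prodr_gt0 => k _; rewrite invr_gt0.
Qed.

Lemma indcc_meas (R : realType) (a b : R) : measurable_fun [set: R] (indcc a b).
Proof. exact: measurable_realfun.measurable_indic. Qed.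

Lemma int_indcc_2 (R : realType) :
  (\int[@lebesgue_measure R]_(x in [set: R]) (indcc (-1) 1 x)%:E = (2:R)%:E)%E.
Proof. by rewrite int_indcc; [congr (_%:E); lra | lra]. Qed.

Lemma lb_all (R : realType) (p : nat) (Om Psi : 'M[R]_p) (j : 'I_p) N :
  posdef Om -> posdef Psi ->
  (((Cst Om Psi j * N%:R) * \prod_(k < p | nat_of_ord k != nat_of_ord j) (2:R))%:E
    <= spn_marginal_at0 Om Psi j)%E.
Proof.
move=> hOm hPsi.
have C0 := Cst_gt0 j hOm hPsi.
set C := Cst Om Psi j.
have E := @iter_prod R (fun k => k != nat_of_ord j) (fun _ => indcc (-1) 1) (fun _ => 2)
   (fun _ x => @indcc_ge0 R (-1) 1 x) (fun _ => indcc_meas (-1) 1)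
   (fun _ => int_indcc_2 R) p
   (fun v => ((C * N%:R) * \prod_(k < p | nat_of_ord k != nat_of_ord j) indcc (-1) 1 (v k))%:E)
   (C * N%:R) ltac:(by rewrite mulr_ge0 // ltW) ltac:(by []).
rewrite -E /spn_marginal_at0 /int_Rn_except0.
apply: le_iter_int.
  move=> v; rewrite lee_fin; apply: mulr_ge0; first by apply: mulr_ge0; [exact: ltW | exact: ler0n].
  by apply: prodr_ge0 => k _; exact: indcc_ge0.
move=> v Pv.
have vj : v j = 0 by apply: Pv; rewrite negbK eqxx.
set Pb := \prod_(k < p | nat_of_ord k != nat_of_ord j) indcc (-1) 1 (v k).
have Pb0 : 0 <= Pb by apply: prodr_ge0 => k _; exact: indcc_ge0.
have fs0 : forall k (x : R), 0 <= fs (R:=R) j N k x.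
  by move=> k x; rewrite /fs; case: ifP => _; [exact: hN_ge0 | exact: indcc_ge0].
have fsm : forall k, measurable_fun [set: R] (fs j N k).
  by move=> k; rewrite /fs; case: ifP => _; [exact: hN_meas | exact: indcc_meas].
have fsi : forall k, (\int[@lebesgue_measure R]_(x in [set: R]) (fs j N k x)%:E
     = (if k == nat_of_ord j then N%:R else 1)%:E)%E.
  move=> k; rewrite /fs; case: ifP => _; first exact: hN_int.
  by rewrite int_indcc; [congr (_%:E); lra | lra].
have E2 := @iter_prod R predT (fs j N) (fun k => if k == nat_of_ord j then N%:R else 1)
   fs0 fsm fsi p
   (fun w => ((C * Pb) * \prod_(k < p | predT k) fs j N k (w k))%:E)
   (C * Pb) ltac:(by rewrite mulr_ge0 // ltW) ltac:(by []).
have E3 : \prod_(k < p | predT k) (if nat_of_ord k == nat_of_ord j then N%:R else (1:R)) = N%:R.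
  rewrite (bigD1 j) //= eqxx big1 ?mulr1 // => k kj.
  by rewrite ifN.
rewrite E3 in E2.
have -> : (C * N%:R * Pb)%:E = (C * Pb * N%:R)%:E by congr (_%:E); ring.
rewrite -E2 /int_Rn.
apply: le_iter_int.
  move=> w; rewrite lee_fin; apply: mulr_ge0; first by apply: mulr_ge0 => //; exact: ltW.
  by apply: prodr_ge0 => k _.
move=> w _; rewrite lee_fin.
exact: point_lb.
Qed.

Unset Implicit Arguments.

Theorem proposition2p3 (R : realType) (p : nat) (Om Psi : 'M[R]_p) :
  (1 <= p)%N ->
  posdef Om ->
  posdef Psi ->
  (forall i : 'I_p, Psi i i = 1) ->
  (exists i k : 'I_p, i != k /\ Psi i k != 0) ->
  forall j : 'I_p, spn_marginal_at0 Om Psi j = +oo%E.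
Proof.
move=> _ hOm hPsi _ _ j.
have lb := lb_all j _ hOm hPsi.
have C0 := Cst_gt0 j hOm hPsi.
set C := Cst Om Psi j in lb C0.
set B := \prod_(k < p | nat_of_ord k != nat_of_ord j) (2:R) in lb.
have B0 : 0 < B by apply: prodr_gt0.
case E: (spn_marginal_at0 Om Psi j) lb => [r| |] lb //.
- exfalso.
  have := lb (Num.trunc (r / (C * B))).+1.
  have := truncnS_gt (r / (C * B)).
  set X := ((Num.trunc (r / (C * B))).+1)%:R.
  rewrite ltr_pdivrMr; last exact: mulr_gt0.
  move=> h1; rewrite lee_fin mulrAC mulrC => h2.
  by have := lt_le_trans h1 h2; rewrite ltxx.
- have := lb 0%N.
  by rewrite mulr0 mul0r leeNy_eq.
Qed.
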